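(* Let $\mathbb{K}=(K,+,\times,0,1)$ be a semiring and let $A_1$ and $A_2$ be two RWTAs over the graded alphabet $\Sigma$ with weights in $K$. Then for every tree $t\in T_\Sigma$, $\mathbb{P}_{A_1\times A_2}(t)=\mathbb{P}_{A_1}(t)\times\mathbb{P}_{A_2}(t)$.
   Context: A graded alphabet is a finite set $\Sigma=\bigcup_{k\in\mathbb{N}}\Sigma_k$; $T_\Sigma$ is the set of trees $f(t_1,\ldots,t_k)$ with $f\in\Sigma_k$. A semiring $(K,+,\times,0,1)$: $(K,+)$ commutative monoid with identity $0$, $(K,\times)$ monoid with identity $1$, $0$ absorbing, $\times$ distributes over $+$. A RWTA with weights in $K$ is $A=(\Sigma,Q,\nu,\delta)$ with $Q$ finite, $\nu:Q\to K$, $\delta\subseteq\bigcup_k Q\times\Sigma_k\times Q^k$. Write $\delta(f,q_1,\ldots,q_k)=\{q\mid(q,f,q_1,\ldots,q_k)\in\delta\}$, extended to subsets by union over tuples; $\nu(S)=\sum_{s\in S}\nu(s)$ ($\nu(\emptyset)=0$); $\Delta(f(t_1,\ldots,t_k))=\delta(f,\Delta(t_1),\ldots,\Delta(t_k))$; $\mathbb{P}_A(t)=\nu(\Delta(t))$. For $A_i=(\Sigma,Q_i,\nu_i,\delta_i)$, the product $A_1\times A_2$ is the RWTA with states $Q_1\times Q_2$, transitions $\delta'(f,(q_{1_1},q_{2_1}),\ldots,(q_{1_k},q_{2_k}))=\delta_1(f,q_{1_1},\ldots,q_{1_k})\times\delta_2(f,q_{2_1},\ldots,q_{2_k})$, and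 root weights $\nu'((q_1,q_2))=\nu_1(q_1)\times\nu_2(q_2)$. *)

(* Defs.v *)
From HB Require Import structures.
From mathcomp Require Import all_boot all_order all_algebra.
Set Implicit Arguments. Unset Strict Implicit. Unset Printing Implicit Defensive.
Import GRing.Theory.
Local Open Scope ring_scope.

(* Graded alphabet: a finite type Sigma with an arity function ar. *)

(* Trees over Sigma; a tree is in T_Sigma iff it is well-graded (wf_tree). *)
Inductive tree (Sigma : Type) : Type :=
  Node : Sigma -> seq (tree Sigma) -> tree Sigma.
Arguments Node {Sigma}.

Fixpoint wf_tree (Sigma : Type) (ar : Sigma -> nat) (t : tree Sigma) : bool :=
  match t with
  | Node f ts => (size ts == ar f) && all (wf_tree ar) ts
  end.

(* The transition relation delta is a subset of the union over k of
   Q x Sigma_k x Q^k: delta q f s means (q, f, s) is a transition, and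
   this can only hold when the length of s is the arity of f. *)
Record rwta (Sigma : finType) (ar : Sigma -> nat) (K : pzSemiRingType)
    (Q : finType) := RWTA {
  nu : Q -> K;
  delta : Q -> Sigma -> seq Q -> bool;
  delta_ar : forall q f s, delta q f s -> size s = ar f
}.

Section Run.
Variables (Sigma : finType) (ar : Sigma -> nat) (K : pzSemiRingType) (Q : finType).
Variable A : rwta ar K Q.

Definition delta_set (f : Sigma) (Ss : seq {set Q}) : {set Q} :=
  [set q | [exists s : (size Ss).-tuple Q,
              all2 (fun x (S : {set Q}) => x \in S) s Ss && delta A q f s]].

Fixpoint Delta (t : tree Sigma) : {set Q} :=
  match t with
  | Node f ts => delta_set f (map Delta ts)
  end.

Definition nu_set (S : {set Q}) : K := \sum_(q in S) nu A q.

Definition weight (t : tree Sigma) : K := nu_set (Delta t).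
End Run.

Section Product.
Variables (Sigma : finType) (ar : Sigma -> nat) (K : pzSemiRingType)
  (Q1 Q2 : finType) (A1 : rwta ar K Q1) (A2 : rwta ar K Q2).

Definition prod_nu (q : Q1 * Q2) : K := nu A1 q.1 * nu A2 q.2.

Definition prod_delta (q : Q1 * Q2) (f : Sigma) (s : seq (Q1 * Q2)) : bool :=
  delta A1 q.1 f (map fst s) && delta A2 q.2 f (map snd s).

Lemma prod_delta_ar q f s : prod_delta q f s -> size s = ar f.
Proof. by case/andP=> /delta_ar; rewrite size_map. Qed.

Definition prod_rwta : rwta ar K (Q1 * Q2)%type :=
  RWTA prod_nu prod_delta_ar.
End Product.

(* Main.v *)
Require Import Defs.
From Stdlib Require Lists.List.
From mathcomp Require Import all_boot all_order all_algebra.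
Local Open Scope ring_scope.

Section Aux.

Lemma ex_tupleP (Q : finType) (Ss : seq {set Q}) (P : seq Q -> bool) :
  reflect (exists s : seq Q, all2 (fun x (S : {set Q}) => x \in S) s Ss && P s)
    [exists s : (size Ss).-tuple Q, all2 (fun x (S : {set Q}) => x \in S) s Ss && P s].
Proof.
apply: (iffP existsP) => [[s Hs]|[s /andP[Ha Hp]]]; first by exists s.
have Hsz : size s == size Ss by move: Ha; rewrite all2E => /andP[].
exists (Tuple Hsz); by rewrite /= Ha Hp.
Qed.

Lemma all2_setX (T : Type) (Q1 Q2 : finType) (F1 : T -> {set Q1}) (F2 : T -> {set Q2})
   (s : seq (Q1 * Q2)) (ts : seq T) :
  all2 (fun x (S : {set Q1 * Q2}) => x \in S) s [seq setX (F1 t) (F2 t) | t <- ts] =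
  all2 (fun x (S : {set Q1}) => x \in S) (map fst s) (map F1 ts) &&
  all2 (fun x (S : {set Q2}) => x \in S) (map snd s) (map F2 ts).
Proof.
elim: s ts => [|x s IH] [|t ts] //=.
case: x => a b; rewrite in_setX IH; by case: (a \in F1 t); case: (b \in F2 t);
  rewrite /= ?andbF.
Qed.

Variables (Sigma : finType) (ar : Sigma -> nat) (K : pzSemiRingType)
  (Q1 Q2 : finType) (A1 : rwta ar K Q1) (A2 : rwta ar K Q2).

Lemma delta_set_prod (T : Type) (F1 : T -> {set Q1}) (F2 : T -> {set Q2}) f ts :
  delta_set (prod_rwta A1 A2) f [seq setX (F1 t) (F2 t) | t <- ts] =
  setX (delta_set A1 f (map F1 ts)) (delta_set A2 f (map F2 ts)).
Proof.
apply/setP => [[q1 q2]]; rewrite in_setX !inE.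
apply/ex_tupleP/andP => [[s /andP[]]|[/ex_tupleP[s1 /andP[H1 D1]] /ex_tupleP[s2 /andP[H2 D2]]]].
  rewrite all2_setX => /andP[H1 H2] /andP[D1 D2]; split.
    by apply/ex_tupleP; exists (map fst s); rewrite H1 D1.
  by apply/ex_tupleP; exists (map snd s); rewrite H2 D2.
have E1 : size s1 = size ts by move: H1; rewrite all2E size_map => /andP[/eqP].
have E2 : size s2 = size ts by move: H2; rewrite all2E size_map => /andP[/eqP].
exists (zip s1 s2).
have Z1 : map fst (zip s1 s2) = s1 by rewrite -/(unzip1 _) unzip1_zip // E1 E2.
have Z2 : map snd (zip s1 s2) = s2 by rewrite -/(unzip2 _) unzip2_zip // E1 E2.
by rewrite all2_setX /= /prod_delta /= Z1 Z2 H1 H2 D1 D2.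
Qed.

Fixpoint tree_ind' (P : tree Sigma -> Prop)
  (H : forall f ts, (forall t, Stdlib.Lists.List.In t ts -> P t) -> P (Node f ts)) t : P t :=
  match t with
  | Node f ts => H f ts ((fix aux ts : forall t, Stdlib.Lists.List.In t ts -> P t :=
      match ts with
      | nil => fun t (h : Stdlib.Lists.List.In t nil) => False_ind _ h
      | t0 :: ts' => fun t h => match h with
          | or_introl e => eq_ind t0 P (tree_ind' P H t0) t e
          | or_intror h' => aux ts' t h'
          end
      end) ts)
  end.

Lemma Delta_prod t :
  Delta (prod_rwta A1 A2) t = setX (Delta A1 t) (Delta A2 t).
Proof.
elim/tree_ind': t => f ts IH /=.
rewrite -delta_set_prod; congr delta_set.
elim: ts IH => [|t ts IHs] IH //=.
rewrite IH; last by left.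
by rewrite IHs // => t' h; apply: IH; right.
Qed.

End Aux.

Theorem proposition3 (Sigma : finType) (ar : Sigma -> nat) (K : pzSemiRingType)
    (Q1 Q2 : finType) (A1 : rwta ar K Q1) (A2 : rwta ar K Q2)
    (t : tree Sigma) :
  wf_tree ar t ->
  weight (prod_rwta A1 A2) t = weight A1 t * weight A2 t.
Proof.
move=> _; rewrite /weight Delta_prod /nu_set.
rewrite big_distrl /=.
symmetry; under eq_bigr => q1 _ do rewrite (big_distrr (nu A1 q1)) /=.
rewrite pair_big_dep /=.
symmetry; apply: eq_big => [[a b]|[a b] _] //=; by rewrite in_setX.
Qed.
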